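(* Consider TD-SVRG (Algorithm 1, as defined in the context) run on a dataset with any step size $\alpha>0$ and any inner-loop length $M\ge 1$. Then for every epoch $m\ge 1$, $$2\alpha M\,\mathbb E[f_d(\tilde\theta_m)]-2M\alpha^2\,\mathbb E[w(\tilde\theta_m)]\le \mathbb E\big[\|\tilde\theta_{m-1}-\theta^*\|^2\big]+2\alpha^2M\,\mathbb E[w(\tilde\theta_{m-1})],$$ where the expectations are over all randomness of the algorithm (all previous epochs and the samples drawn in epoch $m$).
   Context: Finite-sample setting. Let $\mathcal S$ be a finite state space, $\phi:\mathcal S\to\mathbb R^d$ a feature map with $\|\phi(s)\|_2\le 1$ for all $s$, $r:\mathcal S\times\mathcal S\to\mathbb R$ a reward function and $\gamma\in[0,1)$. For a pair of states $(s,s')$ and $\theta\in\mathbb R^d$ let $g_{s,s'}(\theta)=(r(s,s')+\gamma\phi(s')^T\theta-\phi(s)^T\theta)\phi(s)$. A dataset is a state trajectory $s_1,\dots,s_{N+1}$, giving the $N$ pairs $(s_t,s_{t+1})$, $t=1,\dots,N$. Let $A_d=\frac1N\sum_{t=1}^N\phi(s_t)(\phi(s_t)-\gamma\phi(s_{t+1}))^T$ and $b_d=\frac1N\sum_{t=1}^N r(s_t,s_{t+1})\phi(s_t)$, so that $\bar g(\theta):=\frac1N\sum_{t=1}^N g_{s_t,s_{t+1}}(\theta)=-A_d\theta+b_d$. Assume $A_d$ is nonsingular and let $\theta^*=A_d^{-1}b_d$. Define $f_d(\theta)=(\theta-\theta^* )^TA_d(\theta-\theta^* )$ and $w(\theta)=\frac1N\sum_{t=1}^N\|g_{s_t,s_{t+1}}(\theta)-g_{s_t,s_{t+1}}(\theta^*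 )\|^2$. Algorithm 1 (TD-SVRG): given $\alpha>0$, an integer $M\ge1$ and an initial $\tilde\theta_0\in\mathbb R^d$, for epochs $m=1,2,\dots$: set $\tilde\theta=\tilde\theta_{m-1}$, compute $\bar g(\tilde\theta)$, set $\theta_0=\tilde\theta$; for $t=1,\dots,M$ draw an index $i_t$ uniformly from $\{1,\dots,N\}$, independently of everything else, put $(s,s')=(s_{i_t},s_{i_t+1})$, $v_t=g_{s,s'}(\theta_{t-1})-g_{s,s'}(\tilde\theta)+\bar g(\tilde\theta)$ and $\theta_t=\theta_{t-1}+\alpha v_t$; finally set $\tilde\theta_m=\theta_{t'}$ where $t'$ is drawn uniformly from $\{0,\dots,M-1\}$ independently of everything else. *)

(* Defs.v *)
From HB Require Import structures.
From mathcomp Require Import all_boot all_order all_algebra.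
Set Implicit Arguments. Unset Strict Implicit. Unset Printing Implicit Defensive.
Import Order.TTheory GRing.Theory Num.Theory.
Local Open Scope ring_scope.

Definition dotv {R : realFieldType} {d : nat} (u v : 'cV[R]_d) : R := (u^T *m v) 0 0.
Definition sqnorm {R : realFieldType} {d : nat} (u : 'cV[R]_d) : R := dotv u u.

Section TDSVRG.
Variables (R : realFieldType) (S : finType) (d : nat)
  (phi : S -> 'cV[R]_d) (r : S -> S -> R) (gamma : R).

Definition gTD (s s' : S) (th : 'cV[R]_d) : 'cV[R]_d :=
  (r s s' + gamma * dotv (phi s') th - dotv (phi s) th) *: phi s.

(* dataset: trajectory traj 0, ..., traj N (0-indexed), pairs (traj t, traj t.+1), t < N *)
Variables (N : nat) (traj : nat -> S).

Definition gbar (th : 'cV[R]_d) : 'cV[R]_d :=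
  N%:R^-1 *: \sum_(t < N) gTD (traj t) (traj t.+1) th.

Definition A_d : 'M[R]_d :=
  N%:R^-1 *: \sum_(t < N) (phi (traj t) *m (phi (traj t) - gamma *: phi (traj t.+1))^T).

Definition b_d : 'cV[R]_d :=
  N%:R^-1 *: \sum_(t < N) (r (traj t) (traj t.+1) *: phi (traj t)).

Definition theta_star : 'cV[R]_d := invmx A_d *m b_d.

Definition f_d (th : 'cV[R]_d) : R :=
  ((th - theta_star)^T *m A_d *m (th - theta_star)) 0 0.

Definition w_d (th : 'cV[R]_d) : R :=
  N%:R^-1 * \sum_(t < N)
     sqnorm (gTD (traj t) (traj t.+1) th - gTD (traj t) (traj t.+1) theta_star).

Variables (alpha : R) (M : nat).

(* randomness of one epoch: the indices i_1..i_M (i_t = o.1 (t-1), pair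
   (traj i, traj i.+1)) and the output index t' = o.2 in {0..M-1} *)
Notation Omega := ({ffun 'I_M -> 'I_N} * 'I_M)%type.

Definition inner_step (tt th : 'cV[R]_d) (i : nat) : 'cV[R]_d :=
  th + alpha *: (gTD (traj i) (traj i.+1) th - gTD (traj i) (traj i.+1) tt + gbar tt).

Definition epoch (tt : 'cV[R]_d) (o : Omega) : 'cV[R]_d :=
  foldl (inner_step tt) tt (take o.2 [seq val (o.1 j) | j <- enum 'I_M]).

Variable theta0 : 'cV[R]_d.

(* ttilde_k as a function of the randomness om = (o_1, o_2, ...) of the epochs *)
Definition theta_tilde (k : nat) (om : seq Omega) : 'cV[R]_d :=
  foldl epoch theta0 (take k om).

Definition Exp (m : nat) (X : seq Omega -> R) : R :=
  (#|{: m.-tuple Omega}|%:R)^-1 * \sum_(om : m.-tuple Omega) X (tval om).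

End TDSVRG.

(* Main.v *)
Require Import Defs.
From HB Require Import structures.
From mathcomp Require Import all_boot all_order all_algebra.
From mathcomp Require Import ring lra.
Import Order.TTheory GRing.Theory Num.Theory.
Local Open Scope ring_scope.



Section Dot.
Variables (R : realFieldType) (d : nat).
Implicit Types (u v w : 'cV[R]_d).

Lemma dotvE u v : dotv u v = \sum_i u i 0 * v i 0.
Proof. by rewrite /dotv mxE; apply: eq_bigr => i _; rewrite mxE. Qed.

Lemma dotvC u v : dotv u v = dotv v u.
Proof. by rewrite !dotvE; apply: eq_bigr => i _; rewrite mulrC. Qed.

Lemma dotvDr u v w : dotv u (v + w) = dotv u v + dotv u w.
Proof. by rewrite !dotvE -big_split; apply: eq_bigr => i _; rewrite mxE mulrDr. Qed.

Lemma dotvDl u v w : dotv (v + w) u = dotv v u + dotv w u.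
Proof. by rewrite dotvC dotvDr !(dotvC u). Qed.

Lemma dotvZr a u v : dotv u (a *: v) = a * dotv u v.
Proof. by rewrite !dotvE mulr_sumr; apply: eq_bigr => i _; rewrite mxE mulrCA. Qed.

Lemma dotvZl a u v : dotv (a *: v) u = a * dotv v u.
Proof. by rewrite dotvC dotvZr dotvC. Qed.

Lemma dotvNr u v : dotv u (- v) = - dotv u v.
Proof. by rewrite -scaleN1r dotvZr mulN1r. Qed.

Lemma dotvNl u v : dotv (- v) u = - dotv v u.
Proof. by rewrite dotvC dotvNr dotvC. Qed.

Lemma dotvBr u v w : dotv u (v - w) = dotv u v - dotv u w.
Proof. by rewrite dotvDr dotvNr. Qed.

Lemma dotvBl u v w : dotv (v - w) u = dotv v u - dotv w u.
Proof. by rewrite dotvDl dotvNl. Qed.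

Lemma dotv_sumr (I : Type) (s : seq I) (P : pred I) (F : I -> 'cV[R]_d) u :
  dotv u (\sum_(i <- s | P i) F i) = \sum_(i <- s | P i) dotv u (F i).
Proof.
elim/big_rec2: _ => [|i y1 y2 _ <-]; last by rewrite dotvDr.
by rewrite dotvE big1 // => i _; rewrite mxE mulr0.
Qed.

Lemma sqnorm_ge0 u : 0 <= sqnorm u.
Proof. by rewrite /sqnorm dotvE; apply: sumr_ge0 => i _; rewrite -expr2 sqr_ge0. Qed.

Lemma sqnormD u v : sqnorm (u + v) = sqnorm u + 2 * dotv u v + sqnorm v.
Proof. rewrite /sqnorm !dotvDl !dotvDr (dotvC v u); ring. Qed.

Lemma sqnormB u v : sqnorm (u - v) = sqnorm u - 2 * dotv u v + sqnorm v.
Proof. rewrite /sqnorm !dotvBl !dotvBr (dotvC v u); ring. Qed.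

Lemma sqnormZ a u : sqnorm (a *: u) = a ^+ 2 * sqnorm u.
Proof. rewrite /sqnorm dotvZl dotvZr; ring. Qed.

Lemma sqnormB_le u v : sqnorm (u - v) <= 2 * sqnorm u + 2 * sqnorm v.
Proof.
have := sqnorm_ge0 (u + v); rewrite sqnormD sqnormB; lra.
Qed.

End Dot.



Lemma mulmx_1x1 (R : comPzRingType) p (X : 'M[R]_(p,1)) (c : 'M[R]_1) :
  X *m c = c 0 0 *: X.
Proof. by apply/matrixP => i j; rewrite !mxE big_ord1 (ord1 j) mulrC. Qed.

Lemma zmod_id (V : zmodType) (x y z w : V) : x - y + w = (x - z) - ((y - z) - w).
Proof. by rewrite !opprB [w + _]addrC !addrA subrK. Qed.

Section TD.
Variables (R : realFieldType) (S : finType) (d : nat)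
  (phi : S -> 'cV[R]_d) (r : S -> S -> R) (gamma : R) (N : nat) (traj : nat -> S).
Hypothesis N0 : (0 < N)%N.
Hypothesis Aunit : A_d phi gamma N traj \in unitmx.

Local Notation G := (fun (k : nat) th => gTD phi r gamma (traj k) (traj k.+1) th).
Local Notation A := (A_d phi gamma N traj).
Local Notation ts := (theta_star phi r gamma N traj).
Local Notation gb := (gbar phi r gamma N traj).

Lemma gTD_lin s s' th : gTD phi r gamma s s' th =
  r s s' *: phi s - (phi s *m (phi s - gamma *: phi s')^T) *m th.
Proof.
rewrite -mulmxA mulmx_1x1 -/(dotv _ _) dotvBl dotvZl /gTD -scalerBl.
congr (_ *: _); ring.
Qed.

Lemma gbarE th : gb th = b_d phi r N traj - A *m th.
Proof.
rewrite /gbar /b_d /A_d -scalemxAl mulmx_suml -scalerBr -sumrB.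
by congr (_ *: _); apply: eq_bigr => i _; rewrite gTD_lin.
Qed.

Lemma Ats : A *m ts = b_d phi r N traj.
Proof. by rewrite /theta_star mulmxA mulmxV // mul1mx. Qed.

Lemma gbarE2 th : gb th = - (A *m (th - ts)).
Proof. by rewrite gbarE -Ats mulmxBr opprB. Qed.

Lemma gbar_ts : gb ts = 0.
Proof. by rewrite gbarE2 subrr mulmx0 oppr0. Qed.

Lemma dot_gbar th : dotv (th - ts) (gb th) = - f_d phi r gamma N traj th.
Proof. by rewrite gbarE2 dotvNr /f_d /dotv mulmxA. Qed.

Lemma N_neq0 : (N%:R : R) != 0.
Proof. by rewrite pnatr_eq0 -lt0n. Qed.

Lemma sum_G th : \sum_(k < N) G k th = N%:R *: gb th.
Proof. by rewrite /gbar scalerA mulfV ?N_neq0 // scale1r. Qed.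

Variable alpha : R.

Lemma step_lemma tt th :
  \sum_(k < N) sqnorm (inner_step phi r gamma N traj alpha tt th k - ts) <=
  N%:R * (sqnorm (th - ts) - 2 * alpha * f_d phi r gamma N traj th
     + 2 * alpha ^+ 2 * w_d phi r gamma N traj th
     + 2 * alpha ^+ 2 * w_d phi r gamma N traj tt).
Proof.
pose e : 'cV[R]_d := th - ts.
pose v := fun k : nat => (G k th - G k tt + gb tt : 'cV[R]_d).
have hk : forall k, inner_step phi r gamma N traj alpha tt th k - ts = e + alpha *: v k.
  by move=> k; rewrite /inner_step /e /v addrAC.
under eq_bigr => k _ do rewrite hk sqnormD sqnormZ dotvZr.
rewrite big_split big_split /= sumr_const card_ord -mulr_sumr -mulr_sumr -dotv_sumr.
have -> : \sum_(k < N) v k = N%:R *: gb th.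
  rewrite /v big_split sumrB /= sumr_const card_ord sum_G sum_G.
  rewrite -scaler_nat; exact: (@subrK _ _ _).
rewrite dotvZr dot_gbar.
pose a := fun k : nat => (G k th - G k ts : 'cV[R]_d).
pose b := fun k : nat => (G k tt - G k ts : 'cV[R]_d).
have hv : forall k, v k = a k - (b k - gb tt).
  move=> k; rewrite /v /a /b.
  exact: zmod_id.
have hb : \sum_(k < N) b k = N%:R *: gb tt.
  by rewrite /b sumrB !sum_G gbar_ts scaler0 subr0.
have hsa : \sum_(k < N) sqnorm (a k) = N%:R * w_d phi r gamma N traj th.
  by rewrite /w_d mulrA mulfV ?N_neq0 // mul1r.
have hsb : \sum_(k < N) sqnorm (b k) = N%:R * w_d phi r gamma N traj tt.
  by rewrite /w_d mulrA mulfV ?N_neq0 // mul1r.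
have hc : \sum_(k < N) sqnorm (b k - gb tt) <= \sum_(k < N) sqnorm (b k).
  under eq_bigr => k _ do rewrite sqnormB.
  rewrite big_split big_split /= sumr_const card_ord sumrN -mulr_sumr.
  have -> : \sum_(i < N) dotv (b i) (gb tt) = dotv (gb tt) (\sum_(i < N) b i).
    by rewrite dotv_sumr; apply: eq_bigr => i _; rewrite dotvC.
  rewrite hb dotvZr.
  have := @sqnorm_ge0 _ _ (gb tt).
  rewrite /sqnorm; set q := dotv (gb tt) (gb tt).
  have hN : (0 : R) < N%:R by rewrite ltr0n.
  rewrite -mulr_natr; nra.
have hv2 : \sum_(k < N) sqnorm (v k) <=
   2 * (N%:R * w_d phi r gamma N traj th) + 2 * (N%:R * w_d phi r gamma N traj tt).
  rewrite -hsa -hsb !mulr_sumr.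
  apply: le_trans (_ : \sum_(k < N) (2 * sqnorm (a k) + 2 * sqnorm (b k - gb tt)) <= _).
    by apply: ler_sum => k _; rewrite hv sqnormB_le.
  rewrite big_split /= -!mulr_sumr lerD2l ler_wpM2l //.
have ha2 : 0 <= alpha ^+ 2 by rewrite sqr_ge0.
have := ler_wpM2l ha2 hv2.
rewrite -mulr_natr -mulr_sumr; nra.
Qed.

End TD.



Section Tup.
Variables (R : realFieldType) (T : finType).

Lemma tuple_headbehead n (t : n.+1.-tuple T) : thead t :: behead t = t.
Proof. by rewrite [in RHS](tuple_eta t). Qed.

Lemma sum_tuple_rcons n (F : seq T -> R) :
  \sum_(t : n.+1.-tuple T) F t = \sum_(p : n.-tuple T) \sum_(x : T) F (rcons p x).
Proof.
rewrite pair_big /=.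
pose h := fun q : n.-tuple T * T => [tuple of rcons q.1 q.2].
pose g := fun t : n.+1.-tuple T =>
  ([tuple of belast (thead t) (behead t)], last (thead t) (behead t)).
rewrite (reindex h) //.
exists g => [[p x] _ | t _].
  rewrite /g /h /=.
  have e := @tuple_headbehead _ [tuple of rcons p x].
  rewrite lastI /= in e.
  case: (rcons_inj e) => e1 e2.
  by congr (_, _); [apply: val_inj; rewrite /= e1 | rewrite e2].
apply: val_inj; rewrite /h /g /=.
by rewrite -lastI tuple_headbehead.
Qed.

Lemma sum_tuple_take n j (G : seq T -> R) : (j <= n)%N ->
  \sum_(s : n.-tuple T) G (take j s) = (#|T| ^ (n - j))%:R * \sum_(s : j.-tuple T) G s.
Proof.
elim: n => [|n IH] hj.
  move: hj; rewrite leqn0 => /eqP ->; rewrite subnn expn0 mul1r.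
  by apply: eq_bigr => s _; rewrite take0 (size0nil (size_tuple s)).
case: (ltngtP j n.+1) hj => // [hlt _|->]; last first.
  rewrite subnn expn0 mul1r => _.
  by apply: eq_bigr => s _; rewrite -{1}(size_tuple s) take_size.
rewrite (@sum_tuple_rcons n (fun s => G (take j s))).
have hjn : (j <= n)%N by [].
rewrite subSn // expnS natrM -mulrA -IH //.
rewrite mulr_sumr; apply: eq_bigr => p _.
have -> : \sum_(x : T) G (take j (rcons p x)) = \sum_(x : T) G (take j p).
  apply: eq_bigr => x _; rewrite -cats1 takel_cat // size_tuple //.
by rewrite sumr_const mulr_natl.
Qed.

End Tup.



Section Epoch.
Variables (R : realFieldType) (S : finType) (d : nat)
  (phi : S -> 'cV[R]_d) (r : S -> S -> R) (gamma : R) (N : nat) (traj : nat -> S)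
  (alpha : R) (M : nat).
Hypothesis N0 : (0 < N)%N.
Hypothesis Aunit : A_d phi gamma N traj \in unitmx.

Local Notation ts := (theta_star phi r gamma N traj).
Local Notation fd := (f_d phi r gamma N traj).
Local Notation wd := (w_d phi r gamma N traj).
Local Notation K := #|'I_M|.

Definition thS (tt : 'cV[R]_d) (s : seq 'I_N) :=
  foldl (inner_step phi r gamma N traj alpha tt) tt (map val s).

Definition Pf tt th := sqnorm (th - ts) - 2 * alpha * fd th
     + 2 * alpha ^+ 2 * wd th + 2 * alpha ^+ 2 * wd tt.

Lemma tuple_step tt t : (t < K)%N ->
  \sum_(s : K.-tuple 'I_N) sqnorm (thS tt (take t.+1 s) - ts) <=
  \sum_(s : K.-tuple 'I_N) Pf tt (thS tt (take t s)).
Proof.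
move=> ht.
rewrite (@sum_tuple_take R _ K t.+1 (fun s => sqnorm (thS tt s - ts)) ht).
rewrite (@sum_tuple_take R _ K t (fun s => Pf tt (thS tt s)) (ltnW ht)).
rewrite (card_ord N) -(subnSK ht) expnS natrM [N%:R * _]mulrC -mulrA.
apply: ler_wpM2l => //.
rewrite (@sum_tuple_rcons R _ t (fun s => sqnorm (thS tt s - ts))) mulr_sumr.
apply: ler_sum => p _.
under eq_bigr => x _ do rewrite /thS map_rcons foldl_rcons.
exact: (@step_lemma _ _ _ _ _ _ _ _ N0 Aunit).
Qed.

Definition Qt tt t := \sum_(s : K.-tuple 'I_N) sqnorm (thS tt (take t s) - ts).
Definition Dt tt t := \sum_(s : K.-tuple 'I_N)
      (2 * alpha * fd (thS tt (take t s)) - 2 * alpha ^+ 2 * wd (thS tt (take t s))).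
Definition Ct tt := \sum_(s : K.-tuple 'I_N) (2 * alpha ^+ 2 * wd tt).

Lemma telescope tt j : (j <= K)%N ->
  Qt tt j + \sum_(0 <= t < j) Dt tt t <= Qt tt 0%N + j%:R * Ct tt.
Proof.
elim: j => [|j IH] hj.
  by rewrite big_geq // addr0 mul0r addr0.
have h2 := @tuple_step tt j hj.
have h1 := IH (ltnW hj).
have e : \sum_(s : K.-tuple 'I_N) Pf tt (thS tt (take j s)) = Qt tt j - Dt tt j + Ct tt.
  by rewrite /Qt /Dt /Ct -sumrB -big_split; apply: eq_bigr => s _; rewrite /Pf /=; ring.
rewrite e -/(Qt tt j.+1) in h2.
rewrite big_nat_recr //= -natr1 mulrDl mul1r.
lra.
Qed.

Lemma epoch_sum tt (X : 'cV[R]_d -> R) :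
  \sum_(o : ({ffun 'I_M -> 'I_N} * 'I_M)%type)
     X (@epoch R S d phi r gamma N traj alpha M tt o) =
  \sum_(0 <= t < M) \sum_(s : K.-tuple 'I_N) X (thS tt (take t s)).
Proof.
rewrite (_ : \sum_(o : ({ffun 'I_M -> 'I_N} * 'I_M)%type) _ =
  \sum_(f : {ffun 'I_M -> 'I_N}) \sum_(t : 'I_M) X (@epoch R S d phi r gamma N traj alpha M tt (f, t))); last first.
  by rewrite pair_big; apply: eq_bigr => [[]].
rewrite exchange_big big_mkord; apply: eq_bigr => t _.
rewrite (reindex (@Finfun 'I_M 'I_N)); last first.
  by exists fgraph => x _; [rewrite FinfunK | rewrite fgraphK].
apply: eq_bigr => s _.
rewrite /epoch /thS /=; congr (X (foldl _ _ _)).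
rewrite map_take; congr take.
by rewrite -[in RHS](FinfunK s) -codom_ffun codomE -map_comp.
Qed.
Lemma epoch_ineq tt :
  2 * alpha * M%:R * \sum_(o : ({ffun 'I_M -> 'I_N} * 'I_M)%type)
       fd (@epoch R S d phi r gamma N traj alpha M tt o)
  - 2 * M%:R * alpha ^+ 2 * \sum_(o : ({ffun 'I_M -> 'I_N} * 'I_M)%type)
       wd (@epoch R S d phi r gamma N traj alpha M tt o)
  <= #|{: ({ffun 'I_M -> 'I_N} * 'I_M)%type}|%:R * (sqnorm (tt - ts) + 2 * alpha ^+ 2 * M%:R * wd tt).
Proof.
rewrite !epoch_sum.
have hMK : (M <= K)%N by rewrite card_ord.
have tel := @telescope tt M hMK.
have hQ : 0 <= Qt tt M by apply: sumr_ge0 => s _; apply: sqnorm_ge0.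
set C := #|{: K.-tuple 'I_N}|.
have hQ0 : Qt tt 0%N = C%:R * sqnorm (tt - ts).
  rewrite /Qt; under eq_bigr => s _ do rewrite take0.
  by rewrite sumr_const -[_ *+ #|_|]mulr_natl.
have hC : Ct tt = C%:R * (2 * alpha ^+ 2 * wd tt).
  by rewrite /Ct sumr_const -[_ *+ #|_|]mulr_natl.
have hD : \sum_(0 <= t < M) Dt tt t =
   2 * alpha * \sum_(0 <= t < M) \sum_(s : K.-tuple 'I_N) fd (thS tt (take t s))
   - 2 * alpha ^+ 2 * \sum_(0 <= t < M) \sum_(s : K.-tuple 'I_N) wd (thS tt (take t s)).
  rewrite /Dt !mulr_sumr -sumrB; apply: eq_bigr => t _.
  by rewrite !mulr_sumr -sumrB.
have hO : #|{: ({ffun 'I_M -> 'I_N} * 'I_M)%type}| = (C * M)%N.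
  by rewrite card_prod card_ffun /C card_tuple card_ord.
rewrite hO natrM.
rewrite hQ0 hC hD in tel.
set F := \sum_(0 <= t < M) _ in tel *.
set W := \sum_(0 <= t < M) _ in tel *.
have hM : (0 : R) <= M%:R by [].
have h : 2 * alpha * F - 2 * alpha ^+ 2 * W <= C%:R * sqnorm (tt - ts) + M%:R * (C%:R * (2 * alpha ^+ 2 * wd tt)).
  lra.
have := ler_wpM2l hM h.
lra.
Qed.

End Epoch.



Theorem lemma1 (R : realFieldType) (S : finType) (d : nat)
  (phi : S -> 'cV[R]_d) (r : S -> S -> R) (gamma : R)
  (N : nat) (traj : nat -> S) (alpha : R) (M : nat) (theta0 : 'cV[R]_d) :
  (forall s, sqnorm (phi s) <= 1) ->
  0 <= gamma < 1 ->
  (0 < N)%N ->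
  A_d phi gamma N traj \in unitmx ->
  0 < alpha ->
  (1 <= M)%N ->
  forall m : nat, (1 <= m)%N ->
  let E := @Exp R N M m in
  let tt := @theta_tilde R S d phi r gamma N traj alpha M theta0 in
  let ts := theta_star phi r gamma N traj in
  let w := w_d phi r gamma N traj in
  2 * alpha * M%:R * E (fun om => f_d phi r gamma N traj (tt m om))
    - 2 * M%:R * alpha ^+ 2 * E (fun om => w (tt m om))
  <= E (fun om => sqnorm (tt m.-1 om - ts))
     + 2 * alpha ^+ 2 * M%:R * E (fun om => w (tt m.-1 om)).
Proof.
move=> _ _ N0 Aunit _ _ m hm.
case: m hm => [//|k] _.
cbv zeta.
set tt := @theta_tilde R S d phi r gamma N traj alpha M theta0.
set ts := theta_star phi r gamma N traj.
set w := w_d phi r gamma N traj.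
rewrite /Exp /=.
set Om := ({ffun 'I_M -> 'I_N} * 'I_M)%type.
pose T (p : seq Om) := foldl (@epoch R S d phi r gamma N traj alpha M) theta0 p.
have ttS : forall (p : k.-tuple Om) o, tt k.+1 (rcons p o) =
    @epoch R S d phi r gamma N traj alpha M (T p) o.
  move=> p o; rewrite /tt /theta_tilde take_oversize ?foldl_rcons //.
  by rewrite size_rcons size_tuple.
have tt0 : forall (p : k.-tuple Om) o, tt k (rcons p o) = T p.
  move=> p o; rewrite /tt /theta_tilde -cats1 takel_cat ?size_tuple //.
  by rewrite -{1}(size_tuple p) take_size.
rewrite (@sum_tuple_rcons R Om k (fun s => f_d phi r gamma N traj (tt k.+1 s))).
rewrite (@sum_tuple_rcons R Om k (fun s => w (tt k.+1 s))).
rewrite (@sum_tuple_rcons R Om k (fun s => sqnorm (tt k s - ts))).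
rewrite (@sum_tuple_rcons R Om k (fun s => w (tt k s))).
have hS1 : forall X : 'cV[R]_d -> R,
    \sum_(p : k.-tuple Om) \sum_(o : Om) X (tt k.+1 (rcons p o)) =
    \sum_(p : k.-tuple Om) \sum_(o : Om) X (@epoch R S d phi r gamma N traj alpha M (T p) o).
  by move=> X; apply: eq_bigr => p _; apply: eq_bigr => o _; rewrite ttS.
have hS2 : forall X : 'cV[R]_d -> R,
    \sum_(p : k.-tuple Om) \sum_(o : Om) X (tt k (rcons p o)) =
    \sum_(p : k.-tuple Om) (#|{: Om}|%:R * X (T p)).
  by move=> X; apply: eq_bigr => p _; rewrite (eq_bigr (fun=> X (T p))) ?sumr_const ?mulr_natl // => o _; rewrite tt0.
rewrite (hS1 (f_d phi r gamma N traj)) (hS1 w) (hS2 (fun th => sqnorm (th - ts))) (hS2 w).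
set A1 := \sum_(p : k.-tuple Om) \sum_(o : Om) f_d phi r gamma N traj _.
set A2 := \sum_(p : k.-tuple Om) \sum_(o : Om) w _.
set c := #|{: Om}|%:R.
have key : 2 * alpha * M%:R * A1 - 2 * M%:R * alpha ^+ 2 * A2 <=
   \sum_(p : k.-tuple Om) c * (sqnorm (T p - ts) + 2 * alpha ^+ 2 * M%:R * w (T p)).
  rewrite /A1 /A2 !mulr_sumr -sumrB; apply: ler_sum => p _.
  exact: (@epoch_ineq R S d phi r gamma N traj alpha M N0 Aunit (T p)).
rewrite (_ : \sum_(p : k.-tuple Om) c * (sqnorm (T p - ts) + 2 * alpha ^+ 2 * M%:R * w (T p)) =
   \sum_(p : k.-tuple Om) c * sqnorm (T p - ts) + 2 * alpha ^+ 2 * M%:R * \sum_(p : k.-tuple Om) c * w (T p)) in key; last first.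
  rewrite mulr_sumr -big_split /=; apply: eq_bigr => p _; ring.
set B1 := \sum_(p : k.-tuple Om) c * sqnorm (T p - ts) in key *.
set B2 := \sum_(p : k.-tuple Om) c * w (T p) in key *.
set ci := _^-1.
have hci : 0 <= ci by rewrite invr_ge0.
have := ler_wpM2l hci key.
lra.
Qed.
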